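(* Let $Q$ be a finite quiver without oriented cycles, $k$ a field, and $I$ an admissible ideal of the path algebra $kQ$. Let $d\colon kQ\to kQ$ be a $k$-linear map such that $d(I)\subseteq I$ and such that for every path $u$ of $Q$ there is $t_u\in k$ with $d(u)=t_uu$. Let $\equiv_I$ be the smallest equivalence relation on the set of paths of $Q$ such that $u\equiv_I v$ whenever $u,v$ appear with nonzero coefficient in a same minimal relation of $I$. Then for all paths $u,v$, $u\equiv_I v$ implies $t_u=t_v$.
   Context: An ideal $I$ of $kQ$ is admissible if $(kQ^+)^N\subseteq I\subseteq(kQ^+)^2$ for some $N\ge 2$, where $kQ^+$ is the ideal generated by the arrows. A minimal relation of $I$ is a nonzero element $\sum_{i=1}^st_iu_i\in I$ with $t_i\in k^*$ and $u_i$ pairwise distinct paths such that no nonempty proper subsum $\sum_{i\in S}t_iu_i$ lies in $I$. *)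

(* Defs.v *)
From mathcomp Require Import all_boot all_algebra.
Set Implicit Arguments. Unset Strict Implicit. Unset Printing Implicit Defensive.
Import GRing.Theory.
Local Open Scope ring_scope.

Section PathAlgebra.
Variables (k : fieldType) (V A : finType) (src tgt : A -> V).

(* A path is a starting vertex x together with a sequence of composable
   arrows a1 a2 ... an (src a1 = x, tgt ai = src a(i+1)); the empty
   sequence is the trivial path e_x. *)
Definition path_ok (xp : V * seq A) : bool :=
  match xp.2 with
  | [::] => true
  | a :: p' => (src a == xp.1) && path (fun a b => tgt a == src b) a p'
  end.

Definition qpath := {xp : V * seq A | path_ok xp}.

Definition pstart (u : qpath) : V := (val u).1.
Definition parrows (u : qpath) : seq A := (val u).2.
Definition plen (u : qpath) : nat := size (parrows u).
Definition pend_raw (x : V) (p : seq A) : V := foldl (fun _ a => tgt a) x p.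
Definition pend (u : qpath) : V := pend_raw (pstart u) (parrows u).

Definition acyclic : Prop :=
  forall u : qpath, (0 < plen u)%N -> pend u != pstart u.

(* Elements of kQ: k-valued functions on paths (coefficient of each path).
   When Q has no oriented cycles there are finitely many paths, so this is
   exactly the path algebra kQ. *)
Definition kQ := qpath -> k.

Definition kQzero : kQ := fun _ => 0.
Definition kQadd (f g : kQ) : kQ := fun w => f w + g w.
Definition kQscale (c : k) (f : kQ) : kQ := fun w => c * f w.

(* multiplication: concatenation of paths (u then v); coefficient of w is
   the sum over all factorizations w = u v *)
Definition kQmul (f g : kQ) : kQ := fun w =>
  let x := pstart w in let p := parrows w in
  \sum_(i < (size p).+1)
    match (insub (x, take i p) : option qpath),
          (insub (pend_raw x (take i p), drop i p) : option qpath) with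
    | Some u, Some v => f u * g v
    | _, _ => 0
    end.

Definition pathel (u : qpath) : kQ := fun w => if w == u then 1 else 0.

Definition is_ideal (I : kQ -> Prop) : Prop :=
  [/\ I kQzero,
      (forall f g, I f -> I g -> I (kQadd f g)),
      (forall c f, I f -> I (kQscale c f)),
      (forall f g, I g -> I (kQmul f g)) &
      (forall f g, I f -> I (kQmul f g))].

Inductive gen_ideal (S : kQ -> Prop) : kQ -> Prop :=
| gi_base f : S f -> gen_ideal S f
| gi_zero : gen_ideal S kQzero
| gi_add f g : gen_ideal S f -> gen_ideal S g -> gen_ideal S (kQadd f g)
| gi_scale c f : gen_ideal S f -> gen_ideal S (kQscale c f)
| gi_mull f g : gen_ideal S g -> gen_ideal S (kQmul f g)
| gi_mulr f g : gen_ideal S f -> gen_ideal S (kQmul f g).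

Definition kQplus : kQ -> Prop :=
  gen_ideal (fun f => exists u : qpath, plen u = 1%N /\ f = pathel u).

Inductive ideal_prod (J1 J2 : kQ -> Prop) : kQ -> Prop :=
| ip_zero : ideal_prod J1 J2 kQzero
| ip_mul f g : J1 f -> J2 g -> ideal_prod J1 J2 (kQmul f g)
| ip_add f g : ideal_prod J1 J2 f -> ideal_prod J1 J2 g ->
               ideal_prod J1 J2 (kQadd f g).

Fixpoint ideal_pow (J : kQ -> Prop) (n : nat) : kQ -> Prop :=
  match n with
  | 0 => fun _ => True
  | 1 => J
  | n'.+1 => ideal_prod (ideal_pow J n') J
  end.

Definition admissible (I : kQ -> Prop) : Prop :=
  is_ideal I /\
  exists N : nat, (2 <= N)%N /\
    (forall f, ideal_pow kQplus N f -> I f) /\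
    (forall f, I f -> ideal_pow kQplus 2 f).

Definition subsum (S : pred qpath) (r : kQ) : kQ :=
  fun w => if S w then r w else 0.

Definition minimal_relation (I : kQ -> Prop) (r : kQ) : Prop :=
  [/\ I r,
      (exists u, r u != 0) &
      (forall S : pred qpath,
          (exists u, S u && (r u != 0)) ->
          (exists u, ~~ S u && (r u != 0)) ->
          ~ I (subsum S r))].

Definition same_min_rel (I : kQ -> Prop) (u v : qpath) : Prop :=
  exists r, minimal_relation I r /\ r u != 0 /\ r v != 0.

Inductive equivI (I : kQ -> Prop) : qpath -> qpath -> Prop :=
| eqI_base u v : same_min_rel I u v -> equivI I u v
| eqI_refl u : equivI I u u
| eqI_sym u v : equivI I u v -> equivI I v u
| eqI_trans u v w : equivI I u v -> equivI I v w -> equivI I u w.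

Definition klinear (d : kQ -> kQ) : Prop :=
  (forall f g, d (kQadd f g) = kQadd (d f) (d g)) /\
  (forall c f, d (kQscale c f) = kQscale c (d f)).

End PathAlgebra.

(* Main.v *)
Require Import Defs.
From mathcomp Require Import all_boot all_algebra ring.
From Stdlib Require Import FunctionalExtensionality.
Import GRing.Theory.

Lemma path_ok_cons (V A : finType) (src tgt : A -> V) x a q :
  path_ok src tgt (x, a :: q) = (src a == x) && path_ok src tgt (tgt a, q).
Proof. rewrite /path_ok /=; case: q => [|b q'] /=; first by rewrite andbT.
by rewrite (eq_sym (src b)). Qed.

Lemma path_ok_cat (V A : finType) (src tgt : A -> V) x p1 p2 :
  path_ok src tgt (x, p1 ++ p2) =
  path_ok src tgt (x, p1) && path_ok src tgt (pend_raw tgt x p1, p2).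
Proof.
elim: p1 x => [|a p1 IH] x; first by rewrite /= /path_ok /=; case: p2.
rewrite cat_cons !path_ok_cons IH andbA.
by [].
Qed.

Lemma pend_raw_cat (V A : finType) (tgt : A -> V) x p1 p2 :
  pend_raw tgt x (p1 ++ p2) = pend_raw tgt (pend_raw tgt x p1) p2.
Proof. by rewrite /pend_raw foldl_cat. Qed.

Lemma plen_bound (V A : finType) (src tgt : A -> V) :
  acyclic src tgt -> forall u : qpath src tgt, (plen u < #|V|)%N.
Proof.
move=> Hac [[x p] Hok]; rewrite /plen /parrows /=.
rewrite ltnNge; apply/negP => Hle.
set vs := [seq pend_raw tgt x (take i p) | i <- iota 0 (size p).+1].
have Hsz : size vs = (size p).+1 by rewrite size_map size_iota.
have : ~~ uniq vs.
  apply/negP => /card_uniqP Hc.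
  have H : (#|vs| <= #|V|)%N by apply: max_card.
  rewrite Hc Hsz in H.
  by have := leq_trans H Hle; rewrite ltnn.
case/(uniqPn x) => i [j [Hij Hj Heq]].
rewrite Hsz ltnS in Hj.
rewrite !(nth_map 0%N) ?size_iota ?ltnS // ?(leq_trans (ltnW Hij)) // in Heq.
rewrite !nth_iota ?ltnS // ?(leq_trans (ltnW Hij)) // !add0n in Heq.
have Htj : take j p = take i (take j p) ++ drop i (take j p) by rewrite cat_take_drop.
have Hok' : path_ok src tgt (pend_raw tgt x (take i p), drop i (take j p)).
  move: Hok; rewrite -{1}(cat_take_drop j p) path_ok_cat => /andP [H1 _].
  move: H1; rewrite {1}Htj path_ok_cat (take_takel _ (ltnW Hij)) => /andP [] //.
pose w : qpath src tgt := exist (fun xp => path_ok src tgt xp) _ Hok'.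
have := Hac w.
rewrite /plen /parrows /pend /pstart /= size_drop size_take_min.
rewrite (minn_idPl Hj) subn_gt0 Hij => /(_ isT).
have E : take i p ++ drop i (take j p) = take j p.
  by rewrite -(take_takel p (ltnW Hij)) cat_take_drop.
by rewrite -pend_raw_cat E -Heq eqxx.
Qed.

Fixpoint allseq (A : finType) (n : nat) : seq (seq A) :=
  match n with
  | 0 => [:: [::]]
  | n'.+1 => [seq a :: s | a <- enum A, s <- allseq A n']
  end.

Lemma mem_allseq (A : finType) (p : seq A) : p \in allseq A (size p).
Proof.
elim: p => [|a p IH] //=.
by apply: (allpairs_f (fun a s => a :: s)) => //; rewrite mem_enum.
Qed.

Fixpoint upto (A : finType) (n : nat) : seq (seq A) :=
  match n with 0 => [::] | n'.+1 => allseq A n' ++ upto A n' end.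

Lemma mem_upto (A : finType) n (p : seq A) : (size p < n)%N -> p \in upto A n.
Proof.
elim: n => [|n IH] //= Hs; rewrite mem_cat.
rewrite ltnS leq_eqVlt in Hs; case/orP: Hs => [/eqP <-|Hlt].
  by rewrite mem_allseq.
by rewrite IH ?orbT.
Qed.

Lemma all_paths (V A : finType) (src tgt : A -> V) :
  acyclic src tgt -> exists s : seq (qpath src tgt), forall u, u \in s.
Proof.
move=> Hac.
exists (pmap insub [seq (x, p) | x <- enum V, p <- upto A #|V|]) => u.
rewrite mem_pmap_sub.
have -> : val u = (pstart u, parrows u) by case: u => [[x p] ?].
apply: (allpairs_f pair); first by rewrite mem_enum.
by apply: mem_upto; exact: plen_bound.
Qed.
Local Open Scope ring_scope.

Lemma dfin (k : fieldType) (V A : finType) (src tgt : A -> V)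
  (d : kQ k src tgt -> kQ k src tgt) (Hlin : klinear d)
  (t : qpath src tgt -> k)
  (Ht : forall u : qpath src tgt, d (pathel k u) = kQscale (t u) (pathel k u)) :
  forall (s : seq (qpath src tgt)) (f : kQ k src tgt), (forall w, f w != 0 -> w \in s) ->
    d f = (fun w => t w * f w).
Proof.
pose Z0 := @kQzero k V A src tgt.
have d0 : d Z0 = Z0.
  have -> : Z0 = kQscale 0 Z0.
    by apply: functional_extensionality => w; rewrite /kQscale mul0r.
  rewrite Hlin.2; apply: functional_extensionality => w; by rewrite /kQscale !mul0r.
elim => [|a s IH] f Hf.
  have -> : f = Z0.
    apply: functional_extensionality => w; apply/eqP; apply: contraT.
    by move/Hf.
  rewrite d0; apply: functional_extensionality => w; by rewrite /Z0 /kQzero mulr0.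
have Hf' : f = kQadd (subsum (predC1 a) f) (kQscale (f a) (pathel k a)).
  apply: functional_extensionality => w.
  rewrite /kQadd /subsum /kQscale /pathel /=.
  by case: (w =P a) => [->|_] /=; rewrite ?mulr1 ?mulr0 ?add0r ?addr0.
rewrite {1}Hf' Hlin.1 Hlin.2 Ht (IH (subsum (predC1 a) f)).
  apply: functional_extensionality => w.
  rewrite /kQadd /subsum /kQscale /pathel /=.
  case: (w =P a) => [->|_] /=.
    by rewrite mulr0 add0r mulr1 mulrC.
  by rewrite !mulr0 addr0.
move=> w; rewrite /subsum /=; case: (w =P a) => [->|Hw]; first by rewrite eqxx.
rewrite /=.
move=> /Hf; rewrite inE => /orP [/eqP//|//].
Qed.

Lemma base_case (k : fieldType) (V A : finType) (src tgt : A -> V)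
  (Hacyc : acyclic src tgt)
  (I : kQ k src tgt -> Prop) (HI : admissible I)
  (d : kQ k src tgt -> kQ k src tgt) (Hlin : klinear d)
  (HdI : forall f, I f -> I (d f))
  (t : qpath src tgt -> k)
  (Ht : forall u : qpath src tgt, d (pathel k u) = kQscale (t u) (pathel k u))
  (u v : qpath src tgt) :
  same_min_rel I u v -> t u = t v.
Proof.
move=> [r [[Ir _ Hmin] [ru rv]]].
have [s Hs] := @all_paths V A src tgt Hacyc.
have [addI scaleI] : (forall f g, I f -> I g -> I (kQadd f g)) /\
    (forall c f, I f -> I (kQscale c f)).
  by case: HI => [[_ Ha Hsc _ _] _].
have Hd : forall f, d f = (fun w => t w * f w).
  by move=> f; apply: (@dfin k V A src tgt d Hlin t Ht s) => w _; exact: Hs.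
have Hpoly : forall L : seq k, exists g, I g /\
    forall w, g w = (\prod_(l <- L) (t w - l)) * r w.
  elim => [|l L [g [Ig Hg]]].
    by exists r; split => // w; rewrite big_nil mul1r.
  exists (kQadd (d g) (kQscale (- l) g)); split.
    by apply: addI; [apply: HdI | apply: scaleI].
  move=> w; rewrite /kQadd /kQscale Hd Hg big_cons /=; ring.
apply/eqP; apply: contraT => Hne.
pose L := [seq t w | w <- s & t w != t u].
have [g [Ig Hg]] := Hpoly L.
pose c := \prod_(l <- L) (t u - l).
have cne : c != 0.
  rewrite /c prodf_seq_neq0; apply/allP => l /mapP [w].
  by rewrite mem_filter => /andP [Hw _] -> /=; rewrite subr_eq0 eq_sym.
have Hsub : kQscale c^-1 g = subsum (fun w => t w == t u) r.
  apply: functional_extensionality => w; rewrite /kQscale /subsum Hg.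
  case: eqP => [->|Hw]; first by rewrite -/c mulKf.
  case: (eqVneq (r w) 0) => [->|rw]; first by rewrite !mulr0.
  have /eqP -> : \prod_(l <- L) (t w - l) == 0.
    rewrite prodf_seq_eq0; apply/hasP; exists (t w) => /=; last by rewrite subrr.
    apply/mapP; exists w => //; rewrite mem_filter Hs andbT; exact/eqP.
  by rewrite mul0r mulr0.
exfalso; apply: (Hmin (fun w => t w == t u)).
- by exists u; rewrite eqxx ru.
- by exists v; rewrite eq_sym Hne rv.
- by rewrite -Hsub; apply: scaleI.
Qed.

Theorem lemma1p2 (k : fieldType) (V A : finType) (src tgt : A -> V)
  (Hacyc : acyclic src tgt)
  (I : kQ k src tgt -> Prop) (HI : admissible I)
  (d : kQ k src tgt -> kQ k src tgt) (Hlin : klinear d)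
  (HdI : forall f, I f -> I (d f))
  (t : qpath src tgt -> k)
  (Ht : forall u : qpath src tgt, d (pathel k u) = kQscale (t u) (pathel k u))
  (u v : qpath src tgt) :
  equivI I u v -> t u = t v.
Proof.
elim => [x y H|x|x y _ ->|x y z _ -> _ ->] //.
exact: (@base_case k V A src tgt Hacyc I HI d Hlin HdI t Ht x y H).
Qed.
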